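(* Let $\varrho$ be a normalized proximate order of order $\rho>0$ and let $f(x)=\sum_{\ell=0}^\infty x^\ell a_\ell\in A_\varrho$. Suppose $\sigma\ge0$ satisfies $$\frac{1}{\rho}\ln(\sigma)\ge\limsup_{\ell\to\infty}\Big(\frac1\ell\ln|a_\ell|+\ln(\varphi(\ell))\Big)-\frac1\rho-\frac{\ln(\rho)}{\rho},$$ where $\ln(0)=-\infty$. Then for every $\tau'>\sigma$ there exist positive constants $N$ and $C$ such that $$\sup_{\ell\ge N}\big(\ln|a_\ell|+\ell\ln(r)\big)\le\tau' r^{\varrho(r)}+C\qquad\text{for all }r>0.$$
   Context: $\mathbb{R}_n$ is the real Clifford algebra generated by $e_1,\dots,e_n$ with $e_ie_j=-e_je_i$ ($i\ne j$), $e_i^2=-1$, with Euclidean norm $|a|^2=\sum_Aa_A^2$. Paravectors $x=x_0+\sum x_\ell e_\ell$ are identified with $\mathbb{R}^{n+1}$; $\mathbb{S}=\{\sum x_\ell e_\ell:\sum x_\ell^2=1\}$. $\mathcal{SM}_L(\mathbb{R}^{n+1})$ is the set of entire left slice monogenic functions: $f(u+jv)=f_0(u,v)+jf_1(u,v)$ for all $u,v\in\mathbb{R}$, $j\in\mathbb{S}$, with $f_0,f_1$ continuously differentiable, $f_0$ even and $f_1$ odd in $v$, $\partial_uf_0=\partial_vf_1$, $\partial_vf_0=-\partial_uf_1$; each such $f$ equals its series $\sum x^\ell a_\ell$, $a_\ell\in\mathbb{R}_n$. A proximate order is a differentiable $\varrho:[0,\infty)\to[0,\infty)$ with $\lim_{r\to\infty}\varrho(r)=\rho>0$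 and $\lim_{r\to\infty}\varrho'(r)r\ln r=0$; normalized means $r\mapsto r^{\varrho(r)}$ is strictly increasing on $(0,\infty)$ and tends to $0$ as $r\to0^+$; $\varphi$ is the inverse of $r\mapsto r^{\varrho(r)}$. $A_\varrho=\bigcup_{\sigma>0}\{f\in\mathcal{SM}_L(\mathbb{R}^{n+1}):\sup_x|f(x)|e^{-\sigma|x|^{\varrho(|x|)}}<\infty\}$. Here $\ln|a_\ell|=-\infty$ if $a_\ell=0$. *)

(* Defs.v *)
From HB Require Import structures.
From mathcomp Require Import all_boot all_order all_algebra.
From mathcomp Require Import all_classical all_reals all_analysis.
Set Implicit Arguments. Unset Strict Implicit. Unset Printing Implicit Defensive.
Import Order.TTheory GRing.Theory Num.Theory.
Import numFieldNormedType.Exports.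
Local Open Scope ring_scope.


Section Clifford.
Variables (R : realType) (n : nat).

(** The real Clifford algebra R_n: an element is a family (a_A) indexed by the
    subsets A of {e_1,...,e_n}, i.e. a = sum_A a_A e_A. *)
Definition cliff := {ffun {set 'I_n} -> R}.

Definition czero : cliff := [ffun _ => 0].
Definition cone : cliff := [ffun A => (A == finset.set0)%:R].
Definition cadd (a b : cliff) : cliff := [ffun A => a A + b A].
Definition copp (a : cliff) : cliff := [ffun A => - a A].
Definition cscale (k : R) (a : cliff) : cliff := [ffun A => k * a A].

(** e_A e_B = (-1)^(inv(A,B) + |A cap B|) e_(A symdiff B), with e_i e_j = - e_j e_i
    (i<>j) and e_i^2 = -1. *)
Definition csign (A B : {set 'I_n}) : R :=
  (-1) ^+ (#|[set p : 'I_n * 'I_n | [&& p.1 \in A, p.2 \in B & (p.2 < p.1)%N]]|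
           + #|A :&: B|).

Definition symdiff (A B : {set 'I_n}) := (A :\: B) :|: (B :\: A).

Definition cmul (a b : cliff) : cliff :=
  [ffun C => \sum_(A : {set 'I_n}) \sum_(B : {set 'I_n} | symdiff A B == C)
               csign A B * a A * b B].

Fixpoint cpow (a : cliff) (k : nat) : cliff :=
  if k is k'.+1 then cmul (cpow a k') a else cone.

Definition cnorm (a : cliff) : R := Num.sqrt (\sum_A a A ^+ 2).

(** Paravectors x = x_0 + sum_l x_l e_l, identified with R^(n+1) (index 0 is x_0,
    index lift ord0 i is the coefficient of e_(i+1)). *)
Definition pv (x : 'rV[R]_(n.+1)) : cliff :=
  [ffun A => if A == finset.set0 then x ord0 ord0
             else if [pick i in A] is Some i then
                    (if A == [set i] then x ord0 (lift ord0 i) else 0)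
                  else 0].

Definition e0 : 'rV[R]_(n.+1) := \row_i (i == ord0)%:R.

Definition unit_sphere (j : 'rV[R]_(n.+1)) : Prop :=
  j ord0 ord0 = 0 /\ \sum_(i < n.+1 | i != ord0) j ord0 i ^+ 2 = 1.

Definition C1_2 (g : R -> R -> R) : Prop :=
  (forall u v, derivable (fun t => g t v) u 1) /\
  (forall u v, derivable (fun t => g u t) v 1) /\
  continuous (fun p : R * R => derive1 (fun t => g t p.2) p.1) /\
  continuous (fun p : R * R => derive1 (fun t => g p.1 t) p.2).

Definition slice_monogenic (f : 'rV[R]_(n.+1) -> cliff) : Prop :=
  exists f0 f1 : R -> R -> cliff,
    (forall u v j, unit_sphere j ->
       f (u *: e0 + v *: j) = cadd (f0 u v) (cmul (pv j) (f1 u v))) /\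
    (forall A, C1_2 (fun u v => f0 u v A)) /\
    (forall A, C1_2 (fun u v => f1 u v A)) /\
    (forall u v, f0 u (- v) = f0 u v) /\
    (forall u v, f1 u (- v) = copp (f1 u v)) /\
    (forall A u v, derive1 (fun t => f0 t v A) u = derive1 (fun t => f1 u t A) v) /\
    (forall A u v, derive1 (fun t => f0 u t A) v = - derive1 (fun t => f1 t v A) u).

Local Open Scope classical_set_scope.

Definition has_series (f : 'rV[R]_(n.+1) -> cliff) (a : nat -> cliff) : Prop :=
  forall x A,
    (fun N => \sum_(l < N) cmul (cpow (pv x) l) (a l) A) @ \oo --> f x A.

Definition A_class (rho : R -> R) (f : 'rV[R]_(n.+1) -> cliff) : Prop :=
  slice_monogenic f /\
  exists sigma : R, 0 < sigma /\ exists M : R, forall x,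
    cnorm (f x) * expR (- (sigma * (cnorm (pv x)) `^ (rho (cnorm (pv x))))) <= M.

Definition lnnorm (a : cliff) : \bar R :=
  if a == czero then -oo%E else (ln (cnorm a))%:E.

End Clifford.

Section ProxOrder.
Local Open Scope classical_set_scope.
Variable R : realType.

Definition proximate_order (rho : R -> R) (rho0 : R) : Prop :=
  (forall r, 0 <= r -> 0 <= rho r) /\
  (forall r, 0 < r -> derivable rho r 1) /\
  cvg ((fun h => (rho h - rho 0) / h) @ 0^'+) /\
  0 < rho0 /\
  rho r @[r --> +oo] --> rho0 /\
  (derive1 rho r * r * ln r) @[r --> +oo] --> 0.

Definition normalized (rho : R -> R) : Prop :=
  {in `]0, +oo[ &, {mono (fun r => r `^ rho r) : x y / x < y}} /\
  (fun r => r `^ rho r) @ 0^'+ --> 0.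

Definition is_phi (rho phi : R -> R) : Prop :=
  forall t, 0 < t -> 0 < phi t /\ phi t `^ rho (phi t) = t.

End ProxOrder.

(* Main.v *)
Require Import Defs.
From HB Require Import structures.
From mathcomp Require Import all_boot all_order all_algebra.
From mathcomp Require Import all_classical all_reals all_analysis.
From mathcomp Require Import ring lra.
Import Order.TTheory GRing.Theory Num.Theory.
Import numFieldNormedType.Exports.
Local Open Scope ring_scope.
Local Open Scope classical_set_scope.

Lemma core_ineq (R : realType) (k t al d : R) : 0 < k -> 0 < t ->
  al < (1 + ln (t * k)) / k -> al + d <= t * expR (k * d).
Proof.
move=> k0 t0 hal.
have h1 := expR_ge1Dx (k * d + ln (t * k)).
rewrite expRD lnK ?posrE ?mulr_gt0 // in h1.
rewrite ltr_pdivlMr // in hal.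
rewrite -(ler_pM2r k0).
move: h1 hal; set X := ln _; set E := expR _ => h1 hal.
have -> : t * E * k = E * (t * k) by ring.
nra.
Qed.

Lemma esup_lt (R : realType) (u : nat -> \bar R) (b : R) :
  (limn_esup u < b%:E)%E -> exists2 al : R, al < b & exists N, forall l, (N <= l)%N -> (u l < al%:E)%E.
Proof.
rewrite /limn_esup /limf_esup => /ereal_inf_lt [_ [V [N _ HN] <-]] lt.
have ub : forall l, (N <= l)%N -> (u l <= ereal_sup (u @` V))%E.
  by move=> l Nl; apply: ereal_sup_ubound; exists l => //; apply: HN.
move: lt ub; case: (ereal_sup _) => [s| |] //= lt ub.
- exists ((s + b) / 2); first by rewrite lte_fin in lt; lra.
  exists N => l /ub /le_lt_trans; apply; rewrite lte_fin; rewrite lte_fin in lt; lra.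
- exists (b - 1); first lra.
  exists N => l /ub; rewrite leeNy_eq => /eqP ->; exact: ltNyr.
Qed.

Lemma kappas (R : realType) (t r0 al : R) : 0 < t -> 0 < r0 ->
  al < (1 + ln (t * r0)) / r0 -> exists k1 k2 : R,
  [/\ 0 < k1, k1 < r0, r0 < k2, al < (1 + ln (t * k1)) / k1 & al < (1 + ln (t * k2)) / k2].
Proof.
move=> t0 r00 hal.
have hc : (fun k => (1 + ln (t * k)) / k) @ r0 --> (1 + ln (t * r0)) / r0.
  apply: cvgM; last by apply: cvgV; [rewrite gt_eqF | exact: cvg_id].
  apply: cvgD; first exact: cvg_cst.
  have h1 : (fun k => t * k) @ r0 --> t * r0 by exact: cvgMl_tmp cvg_id.
  have := cvg_comp _ _ h1 (continuous_ln (mulr_gt0 t0 r00)).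
  by [].
have := cvgr_gt _ hc al hal.
move=> H; have [e /= e0 He] := proj1 (nbhs_ballP _ _) (H _).
pose e' := Num.min e r0.
have e'0 : 0 < e' by rewrite lt_min e0 r00.
have e'e : e' <= e by rewrite ge_min lexx.
have e'r : e' <= r0 by rewrite ge_min lexx orbT.
exists (r0 - e' / 2), (r0 + e' / 2); split.
- lra.
- lra.
- lra.
- apply: He; rewrite /ball /= ger0_norm; lra.
- apply: He; rewrite /ball /= ler0_norm; lra.
Qed.

Lemma g_mvt (R : realType) (rho : R -> R) (k1 k2 V : R) :
  (forall r, 0 < r -> derivable rho r 1) ->
  (forall c, V <= c -> k1 <= derive1 rho (expR c) * expR c * c + rho (expR c) <= k2) ->
  forall u v, V <= v -> v <= u ->
  k1 * (u - v) <= rho (expR u) * u - rho (expR v) * v <= k2 * (u - v).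
Proof.
move=> Hd Hb u v Vv vu.
pose dg c := derive1 rho (expR c) * expR c * c + rho (expR c).
have D (c : R) : is_derive (c : R^o) (1 : R^o) (fun u => rho (expR u) * u) (dg c).
  have h1 : is_derive (expR c) 1 rho ('D_1 rho (expR c)) := derivableP (Hd _ (expR_gt0 c)).
  have h2 := is_derive1_comp h1 (is_derive_expR c).
  have h3 := is_deriveM h2 (@is_derive_id _ R^o c 1).
  apply: is_derive_eq h3 _.
  rewrite /dg derive1E /= /GRing.scale /=; ring.
have cont : {within `[v, u], continuous (fun u => rho (expR u) * u)}.
  apply: derivable_within_continuous => x _.
  by have [] := D x.
have [c cI ->] := @MVT_segment _ (fun u => rho (expR u) * u) dg v u vu (fun x _ => D x) cont.
have Vc : V <= c by apply: le_trans Vv _; rewrite in_itv /= in cI; case/andP: cI.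
have /andP [b1 b2] := Hb c Vc.
have uv0 : 0 <= u - v by rewrite subr_ge0.
by rewrite !ler_wpM2r.
Qed.

Lemma dg_bounds (R : realType) (rho : R -> R) (r0 k1 k2 : R) : k1 < r0 -> r0 < k2 ->
  rho r @[r --> +oo] --> r0 -> (derive1 rho r * r * ln r) @[r --> +oo] --> 0 ->
  exists V, forall c, V <= c -> k1 <= derive1 rho (expR c) * expR c * c + rho (expR c) <= k2.
Proof.
move=> k1r0 r0k2 Hr Hd.
pose d := Num.min (r0 - k1) (k2 - r0) / 2.
have d0 : 0 < d by rewrite divr_gt0 // lt_min !subr_gt0 k1r0 r0k2.
have d1 : d <= (r0 - k1) / 2 by rewrite ler_pM2r // ge_min lexx.
have d2 : d <= (k2 - r0) / 2 by rewrite ler_pM2r // ge_min lexx orbT.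
have A1 := cvgr_gt _ Hr (r0 - d) ltac:(lra).
have A2 := cvgr_lt _ Hr (r0 + d) ltac:(lra).
have A3 := cvgr_gt _ Hd (- d) ltac:(lra).
have A4 := cvgr_lt _ Hd d ltac:(lra).
have : \forall r \near +oo, [/\ r0 - d < rho r, rho r < r0 + d,
    - d < derive1 rho r * r * ln r & derive1 rho r * r * ln r < d].
  near=> r; split; near: r; [exact: A1|exact: A2|exact: A3|exact: A4].
move=> [M [Mreal HM]].
exists (ln (Num.max M 1) + 1) => c Vc.
have : M < expR c.
  apply: (le_lt_trans (y := Num.max M 1)); first by rewrite le_max lexx.
  rewrite -[X in X < _]lnK ?posrE ?lt_max ?ltr01 ?orbT // ltr_expR; lra.
move=> /HM [h1 h2 h3 h4].
rewrite expRK in h3 h4.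
apply/andP; split; lra.
Unshelve. all: by end_near.
Qed.

Lemma phi_large (R : realType) (rho phi : R -> R) : normalized rho -> is_phi rho phi ->
  forall V, exists N, forall l : nat, (N <= l)%N -> V <= ln (phi l%:R).
Proof.
move=> [Hm _] Hp V.
pose K := expR V; pose T := K `^ rho K.
have T0 : 0 <= T by exact: powR_ge0.
exists (Num.truncn T).+1 => l Nl.
have lT : T < l%:R.
  apply: (lt_le_trans (real_truncnS_gt (ger0_real T0))).
  by rewrite ler_nat.
have l0 : 0 < l%:R :> R by lra.
have [p0 pe] := Hp _ l0.
rewrite -[V]expRK -/K ler_ln ?posrE ?expR_gt0 //.
rewrite leNgt; apply/negP => pK.
have := Hm (phi l%:R) K.
have m1 : phi l%:R \in `]0, +oo[ by rewrite inE /= in_itv /= andbT.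
have m2 : K \in `]0, +oo[ by rewrite inE /= in_itv /= andbT expR_gt0.
move=> /(_ m1 m2); rewrite pK pe -/T; lra.
Qed.

Lemma final_real (R : realType) (rho : R -> R) (k1 k2 V al t U v l : R) :
  0 < k1 -> 0 < k2 -> 0 < t ->
  al < (1 + ln (t * k1)) / k1 -> al < (1 + ln (t * k2)) / k2 ->
  (forall u v, V <= v -> v <= u ->
     k1 * (u - v) <= rho (expR u) * u - rho (expR v) * v <= k2 * (u - v)) ->
  V + `|al| <= v -> l = expR (rho (expR v) * v) ->
  l * (al + U - v) <= t * expR (rho (expR U) * U).
Proof.
move=> k10 k20 t0 h1 h2 Hg Vv ->.
set gU := rho (expR U) * U; set gv := rho (expR v) * v.
have l0 := expR_gt0 gv.
have [neg|pos] := lerP (al + U - v) 0.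
  apply: (le_trans (y := 0)); last by rewrite mulr_ge0 // ?ltW // expR_gt0.
  by rewrite pmulr_rle0.
have alabs : - `|al| <= al by rewrite lerNnormlW.
have aa : 0 <= `|al| := normr_ge0 al.
have alabs2 : al <= `|al| := ler_norm al.
have [k [k0 hk kd]] : exists k, [/\ 0 < k, al < (1 + ln (t * k)) / k & k * (U - v) <= gU - gv].
  have [vU|Uv] := lerP v U.
    exists k1; split => //.
    by have /andP [] := Hg U v ltac:(lra) vU.
  exists k2; split => //.
  have /andP [_ H] := Hg v U ltac:(lra) ltac:(lra).
  rewrite -/gU -/gv in H; lra.
have E : expR gU = expR gv * expR (gU - gv) by rewrite -expRD; congr expR; ring.
rewrite E.
have := @core_ineq R k t al (U - v) k0 t0 hk.
have : expR (k * (U - v)) <= expR (gU - gv) by rewrite ler_expR.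
move=> H1 H2.
have H3 : al + (U - v) <= t * expR (gU - gv).
  apply: (le_trans H2); rewrite ler_pM2l //.
have -> : al + U - v = al + (U - v) by ring.
rewrite mulrCA ler_pM2l //.
Qed.

Theorem lemma3p6 (R : realType) (n : nat) (rho : R -> R) (rho0 : R) (phi : R -> R)
  (f : 'rV[R]_(n.+1) -> cliff R n) (a : nat -> cliff R n) (sigma : R) :
  proximate_order rho rho0 -> normalized rho -> is_phi rho phi ->
  has_series f a -> A_class rho f ->
  0 <= sigma ->
  ((if sigma == 0%R then -oo else (ln sigma / rho0)%R%:E) >=
     limn_esup (fun l : nat =>
       (lnnorm (a l) * (l%:R^-1)%R%:E + (ln (phi l%:R))%:E)%E)
     - ((1 + ln rho0) / rho0)%R%:E)%E ->
  forall tau' : R, sigma < tau' ->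
    exists N : nat, (0 < N)%N /\ exists C : R, 0 < C /\
      forall r : R, 0 < r ->
        (ereal_sup [set (lnnorm (a l) + (l%:R * ln r)%R%:E)%E | l in [set l : nat | (N <= l)%N]]
           <= (tau' * r `^ rho r + C)%:E)%E.
Proof.
move=> [_ [Hd [_ [r00 [Hr Hdr]]]]] Hnorm Hphi _ _ s0 Hlim tau' st.
have t0 : 0 < tau' by lra.
set u := (fun l : nat => _) in Hlim.
pose c0 := (1 + ln rho0) / rho0.
pose b := (1 + ln (tau' * rho0)) / rho0.
have hb : b = ln tau' / rho0 + c0 by rewrite /b /c0 lnM ?posrE // -mulrDl; congr (_ / _); ring.
have Lb : (limn_esup u < b%:E)%E.
  move: Hlim; case: (limn_esup u) => [L| |] //=; last by rewrite ltNyr.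
  - case: eqP => [_|/eqP sn0] //.
    rewrite -EFinB lee_fin => HL.
    have sp : 0 < sigma by rewrite lt_neqAle eq_sym sn0 s0.
    have : ln sigma < ln tau' by rewrite ltr_ln ?posrE.
    have ir : 0 < rho0^-1 by rewrite invr_gt0.
    rewrite -(ltr_pM2r ir) => H.
    rewrite lte_fin hb /c0; lra.
  - by case: eqP.
have [al alb [N0 HN0]] := esup_lt _ _ _ Lb.
have [k1 [k2 [k10 k1r k2r hk1 hk2]]] := kappas _ _ _ _ t0 r00 alb.
have [V HV] := dg_bounds _ _ _ _ _ k1r k2r Hr Hdr.
have Hg := g_mvt _ _ _ _ _ Hd HV.
have [N1 HN1] := phi_large _ _ _ Hnorm Hphi (V + `|al|).
exists (maxn (maxn N0 N1) 1); split; first by rewrite leq_max orbT.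
exists 1; split => // r r0.
apply: ge_ereal_sup => _ [l /= Nl <-].
rewrite !geq_max in Nl; case/andP: Nl => /andP [Nl0 Nl1] l1.
have Hu := HN0 l Nl0.
have Hv := HN1 l Nl1.
rewrite /u /lnnorm in Hu *.
case: ifP => [_|an0] in Hu *; first by rewrite addNye leNye.
rewrite -EFinM -EFinD lte_fin in Hu.
rewrite -EFinD lee_fin.
have lp : 0 < l%:R :> R by rewrite ltr0n.
have [p0 pe] := Hphi _ lp.
set A := ln (cnorm _) in Hu *.
set v := ln (phi l%:R) in Hu Hv.
have HA : A < l%:R * (al - v).
  have il : 0 < (l%:R : R)^-1 by rewrite invr_gt0.
  by rewrite -(ltr_pM2r il) mulrAC mulfV ?gt_eqF // mul1r; lra.
have le : l%:R = expR (rho (expR v) * v).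
  by rewrite /v lnK ?posrE // -{1}pe /powR gt_eqF.
have key := @final_real R rho k1 k2 V al tau' (ln r) v (l%:R) k10 (lt_trans r00 k2r) t0 hk1 hk2 Hg Hv le.
rewrite lnK ?posrE // in key.
have -> : r `^ rho r = expR (rho r * ln r) by rewrite /powR gt_eqF.
have : l%:R * (al + ln r - v) = l%:R * (al - v) + l%:R * ln r by ring.
lra.
Qed.
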